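(* Consider the network Polya contagion process on the complete graph on $N$ nodes with $\Delta_{r,i}(t)=\Delta_{b,i}(t)=\Delta>0$ for all nodes $i$ and times $t$. Let $\rho=\frac{\sum_{k=1}^N R_k}{\sum_{k=1}^N T_k}$. Then for every node $i$, every $n\ge 1$ and every $a\in\{0,1\}$, \[ P(Z_{i,n}=a)=\rho^a(1-\rho)^{1-a}. \]
   Context: Network Polya contagion process: $\mathcal{G}=(V,\mathcal{E})$ is a connected undirected graph, $V=\{1,\dots,N\}$, $\mathcal{N}_i'=\{i\}\cup\{v:(i,v)\in\mathcal{E}\}$; the complete graph has $\mathcal{N}_i'=V$ for all $i$. Each node $i$ has an urn initially containing $R_i\in\mathbb{Z}_{>0}$ red and $B_i\in\mathbb{Z}_{>0}$ black balls, $T_i=R_i+B_i$. The super urn of node $i$ is the union of the urns of nodes in $\mathcal{N}_i'$. At each time $t=1,2,\dots$ every node $i$ simultaneously draws from its super urn; $Z_{i,t}=1$ if red, $0$ if black; then $\Delta_{r,i}(t)$ red balls (if red drawn) or $\Delta_{b,i}(t)$ black balls (if black drawn) are added to node $i$'s own urn. Given the whole history, the time-$n$ draws are conditionally independent with $P(Z_{i,n}=1\mid\{Z_j^{n-1}\}_{j=1}^N)=\dfrac{\sum_{j\in\mathcal{N}_i'}\big(R_j+\sum_{t=1}^{n-1}Z_{j,t}\Delta_{r,j}(t)\big)}{\sum_{j\in\mathcal{N}_i'}\big(T_j+\sum_{t=1}^{n-1}(Z_{j,t}\Delta_{r,j}(t)+(1-Z_{j,t})\Delta_{b,j}(t))\big)}$.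 *)

(* Defs.v *)
(* Discrete (finite) formalization of the network Polya
   contagion process: the law of the first n draw vectors is given by the
   chain rule from the conditional probabilities in the paper. *)
From HB Require Import structures.
From mathcomp Require Import all_boot all_order all_algebra.
Set Implicit Arguments. Unset Strict Implicit. Unset Printing Implicit Defensive.
Import Order.TTheory GRing.Theory Num.Theory.
Local Open Scope ring_scope.

Section Polya.
Variables (R : realFieldType) (N : nat).
(* nbr i j : j belongs to the closed neighbourhood N'_i of i *)
Variable nbr : 'I_N -> 'I_N -> bool.
Variables (R0 B0 : 'I_N -> nat).
(* Delta_r j t, Delta_b j t : balls added at time t (t >= 1) *)
Variables (Dr Db : 'I_N -> nat -> R).

(* a draw vector at one time: z i = true iff node i draws red (Z_{i,t}=1) *)
Definition draw := {ffun 'I_N -> bool}.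

(* a history is the sequence of draw vectors at times 1, 2, ..., size h;
   time t is stored at index t.-1 *)
Definition red_balls (h : seq draw) (j : 'I_N) : R :=
  (R0 j)%:R + \sum_(t < size h) (nth [ffun => false] h t j)%:R * Dr j t.+1.

Definition total_balls (h : seq draw) (j : 'I_N) : R :=
  (R0 j + B0 j)%:R +
  \sum_(t < size h) (if nth [ffun => false] h t j then Dr j t.+1 else Db j t.+1).

(* P(Z_{i,n} = 1 | history h of the first n-1 draws) *)
Definition prob_red (h : seq draw) (i : 'I_N) : R :=
  (\sum_(j | nbr i j) red_balls h j) / (\sum_(j | nbr i j) total_balls h j).

(* conditional probability of the draw vector z given the history h
   (conditional independence across nodes) *)
Definition step_prob (h : seq draw) (z : draw) : R :=
  \prod_i (if z i then prob_red h i else 1 - prob_red h i).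

Definition hist_prob (s : seq draw) : R :=
  \prod_(t < size s) step_prob (take t s) (nth [ffun => false] s t).

(* P(Z_{i,n} = a), for n >= 1 *)
Definition probZ (n : nat) (i : 'I_N) (a : nat) : R :=
  \sum_(s : n.-tuple draw | nat_of_bool (nth [ffun => false] s n.-1 i) == a)
     hist_prob s.
End Polya.

Definition complete_nbr (N : nat) : 'I_N -> 'I_N -> bool := fun _ _ => true.

(* Main.v *)
Require Import Defs.
From HB Require Import structures.
From mathcomp Require Import all_boot all_order all_algebra.
From mathcomp Require Import ring.
Import Order.TTheory GRing.Theory Num.Theory.
Local Open Scope ring_scope.

Lemma sum_tupleS (R : nmodType) (T : finType) (n : nat) (F : n.+1.-tuple T -> R) :
  \sum_(s : n.+1.-tuple T) F s = \sum_(z : T) \sum_(s : n.-tuple T) F [tuple of z :: s].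
Proof.
rewrite pair_bigA /=.
rewrite (reindex (fun p : T * n.-tuple T => [tuple of p.1 :: p.2])) //=.
exists (fun s : n.+1.-tuple T => (thead s, behead_tuple s)).
  by move=> [z s] _ /=; congr pair; apply: val_inj.
by move=> s _; rewrite [in RHS](tuple_eta s).
Qed.
Lemma sum_tuple0 (R : nmodType) (T : finType) (F : 0.-tuple T -> R) :
  \sum_(s : 0.-tuple T) F s = F [tuple].
Proof. by rewrite (big_pred1 [tuple]) // => s; apply/esym/eqP; apply: tuple0. Qed.

Section S.
Variables (R : realFieldType) (N : nat) (R0 B0 : 'I_N -> nat) (Delta : R).
Hypotheses (HR : forall i, (0 < R0 i)%N) (HB : forall i, (0 < B0 i)%N) (HDelta : 0 < Delta).
Definition Dc := fun (_ : 'I_N) (_ : nat) => Delta.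
Definition pr h i := prob_red (@complete_nbr N) R0 B0 Dc Dc h i.
Definition sp h z := step_prob (@complete_nbr N) R0 B0 Dc Dc h z.
Definition d0 : draw N := [ffun => false].
Definition qa (a : nat) (x : R) := if a == 1%N then x else 1 - x.
Definition ind (a : nat) (b : bool) : R := if nat_of_bool b == a then 1 else 0.

Lemma marg h i (F : bool -> R) :
  \sum_(z : draw N) sp h z * F (z i) = pr h i * F true + (1 - pr h i) * F false.
Proof.
pose G (j : 'I_N) (b : bool) := (if b then pr h j else 1 - pr h j) * (if j == i then F b else 1).
have -> : \sum_(z : draw N) sp h z * F (z i) = \sum_(z : draw N) \prod_j G j (z j).
  apply: eq_bigr => z _; rewrite /sp /step_prob /G big_split /=.
  congr (_ * _).
  by rewrite (bigD1 i) //= eqxx big1 ?mulr1 // => j /negbTE ->.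
rewrite -bigA_distr_bigA /= (bigD1 i) //= [X in _ * X]big1 ?mulr1.
  by rewrite big_bool /= /G eqxx addrC.
move=> j /negbTE jn; rewrite big_bool /G /= jn !mulr1.
by rewrite addrC subrK.
Qed.

Definition hp (h s : seq (draw N)) :=
  \prod_(t < size s) sp (h ++ take t s) (nth d0 s t).

Lemma hp_nil h : hp h [::] = 1.
Proof. by rewrite /hp big_ord0. Qed.

Lemma hp_cons h z s : hp h (z :: s) = sp h z * hp (rcons h z) s.
Proof.
rewrite /hp /= big_ord_recl /= cats0; congr (_ * _).
by apply: eq_bigr => t _; rewrite /= -cat_rcons.
Qed.

Definition Ex (h : seq (draw N)) (n : nat) (f : seq (draw N) -> R) :=
  \sum_(s : n.-tuple (draw N)) hp h s * f (h ++ s).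

Lemma Ex0 h f : Ex h 0 f = f h.
Proof. by rewrite /Ex sum_tuple0 /= hp_nil mul1r cats0. Qed.

Lemma ExS h n f : Ex h n.+1 f = \sum_(z : draw N) sp h z * Ex (rcons h z) n f.
Proof.
rewrite /Ex sum_tupleS; apply: eq_bigr => z _.
rewrite mulr_sumr; apply: eq_bigr => s _ /=.
by rewrite hp_cons -cat_rcons mulrA.
Qed.

Lemma sp_sum1 h : \sum_(z : draw N) sp h z = 1.
Proof.
rewrite /sp /step_prob -(bigA_distr_bigA (fun j b => if b then pr h j else 1 - pr h j)) /=.
by apply: big1 => j _; rewrite big_bool /= addrC subrK.
Qed.

Definition Rt h := \sum_j red_balls R0 Dc h j.
Definition Tt h := \sum_j total_balls R0 B0 Dc Dc h j.

Lemma prE h i : pr h i = Rt h / Tt h.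
Proof. by []. Qed.

Lemma Rt_rcons h z : Rt (rcons h z) = Rt h + (\sum_j (z j)%:R) * Delta.
Proof.
rewrite /Rt mulr_suml -big_split /=; apply: eq_bigr => j _.
rewrite /red_balls size_rcons big_ord_recr /= nth_rcons ltnn eqxx -addrA; congr (_ + _).
congr (_ + _); apply: eq_bigr => t _; by rewrite nth_rcons ltn_ord.
Qed.

Lemma Tt_rcons h : forall z, Tt (rcons h z) = Tt h + N%:R * Delta.
Proof.
move=> z; rewrite /Tt -[N in N%:R]card_ord -sumr_const mulr_suml -big_split /=; apply: eq_bigr => j _.
rewrite /total_balls size_rcons big_ord_recr /= nth_rcons ltnn eqxx -addrA mul1r; congr (_ + _).
rewrite /Dc if_same; congr (_ + _); apply: eq_bigr => t _; by rewrite nth_rcons ltn_ord.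
Qed.

Lemma Tt_gt0 (i : 'I_N) h : 0 < Tt h.
Proof.
rewrite /Tt (bigD1 i) //=; apply: ltr_wpDr.
  by apply: sumr_ge0 => j _; rewrite /total_balls addr_ge0 // sumr_ge0 // => t _; rewrite /Dc if_same ltW.
rewrite /total_balls ltr_wpDr //; first by rewrite sumr_ge0 // => t _; rewrite /Dc if_same ltW.
by rewrite ltr0n addn_gt0 HR.
Qed.

Lemma mart (i : 'I_N) n : forall h, Ex h n (fun h' => pr h' i) = pr h i.
Proof.
elim: n => [|n IH] h; first by rewrite Ex0.
rewrite ExS; under eq_bigr do rewrite IH prE Rt_rcons Tt_rcons.
under eq_bigr do rewrite mulrA.
rewrite -mulr_suml.
under eq_bigr do rewrite mulrDr.
rewrite big_split /= -mulr_suml sp_sum1 mul1r.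
under eq_bigr do rewrite mulrA.
rewrite -mulr_suml.
have -> : \sum_(z : draw N) sp h z * \sum_j (z j)%:R = N%:R * pr h i.
  under eq_bigr do rewrite mulr_sumr.
  rewrite exchange_big /=.
  under eq_bigr => j _ do rewrite (marg h j (fun b => b%:R)) /= mulr1 mulr0 addr0.
  rewrite (eq_bigr (fun _ => pr h i)) // sumr_const card_ord mulr_natl.
  by [].

have T0 := Tt_gt0 i h.
have D0 : 0 < Tt h + N%:R * Delta by rewrite ltr_wpDr // mulr_ge0 // ltW.
rewrite prE; field.
by rewrite !gt_eqF.
Qed.

Lemma Ex1 n : forall h, Ex h n (fun _ => 1) = 1.
Proof.
elim: n => [|n IH] h; first by rewrite Ex0.
by rewrite ExS; under eq_bigr do rewrite IH mulr1; rewrite sp_sum1.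
Qed.

Lemma ExB h n f g : Ex h n (fun x => f x - g x) = Ex h n f - Ex h n g.
Proof. by rewrite /Ex -sumrB; apply: eq_bigr => s _; rewrite mulrBr. Qed.

Lemma Exq (i : 'I_N) a n h : Ex h n (fun h' => qa a (pr h' i)) = qa a (pr h i).
Proof.
rewrite /qa; case: (a == 1%N); first exact: mart.
by rewrite ExB Ex1 mart.
Qed.

Lemma mainl (i : 'I_N) a (Ha : (a <= 1)%N) m : forall h,
  \sum_(s : m.+1.-tuple (draw N)) hp h s * ind a (nth d0 s m i)
  = Ex h m (fun h' => qa a (pr h' i)).
Proof.
elim: m => [|m IH] h.
  rewrite sum_tupleS Ex0.
  under eq_bigr do rewrite sum_tuple0 /= hp_cons hp_nil mulr1.
  rewrite marg /ind /qa /=.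
  by case: a Ha => [|[|]] //= _; rewrite ?mulr1 ?mulr0 ?addr0 ?add0r.
rewrite sum_tupleS ExS; apply: eq_bigr => z _.
rewrite -IH mulr_sumr; apply: eq_bigr => s _ /=.
by rewrite hp_cons mulrA.
Qed.

Lemma final (i : 'I_N) n a : (1 <= n)%N -> (a <= 1)%N ->
  probZ (@complete_nbr N) R0 B0 Dc Dc n i a =
  qa a ((\sum_k (R0 k)%:R) / (\sum_k (R0 k + B0 k)%:R)).
Proof.
case: n => [|m] // _ Ha.
rewrite /probZ big_mkcond /=.
transitivity (\sum_(s : m.+1.-tuple (draw N)) hp [::] s * ind a (nth d0 s m i)).
  apply: eq_bigr => s _; rewrite /ind; case: eqP => _; rewrite ?mulr1 ?mulr0 //.
rewrite mainl // Exq prE /Rt /Tt; congr (qa a (_ / _)).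
  by apply: eq_bigr => j _; rewrite /red_balls big_ord0 addr0.
by apply: eq_bigr => j _; rewrite /total_balls big_ord0 addr0.
Qed.
End S.

Theorem lemma1 (R : realFieldType) (N : nat) (R0 B0 : 'I_N -> nat)
  (HR : forall i, (0 < R0 i)%N) (HB : forall i, (0 < B0 i)%N)
  (Delta : R) (HDelta : 0 < Delta) :
  let rho := (\sum_k (R0 k)%:R) / (\sum_k (R0 k + B0 k)%:R) : R in
  forall (i : 'I_N) (n a : nat), (1 <= n)%N -> (a <= 1)%N ->
    probZ (@complete_nbr N) R0 B0 (fun _ _ => Delta) (fun _ _ => Delta) n i a
    = rho ^+ a * (1 - rho) ^+ (1 - a).
Proof.
move=> rho i n a Hn Ha.
rewrite (@final R N R0 B0 Delta HR HDelta i n a Hn Ha) /qa -/rho.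
by case: a Ha => [|[|]] //= _; rewrite ?expr0 ?expr1 ?mul1r ?mulr1.
Qed.
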